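(* Let $G$ be a unital semigroup with unit $e$, let $H$ and $K$ be Hilbert spaces, and let $\mathcal T=(T(g))_{g\in G}\subseteq\mathcal L(H)$ and $\mathcal S=(S(g))_{g\in G}\subseteq\mathcal L(K)$ be representations of $G$ on $H$ and $K$ respectively. Assume there exist $A\in\mathcal L(K,H)$ and $B\in\mathcal L(H,K)$ such that $T(g)=AS(g)B$ for all $g\in G$. Then there exist $\mathcal S$-invariant closed subspaces $K_1\subseteq K_2$ of $K$ and an isomorphism $\mathscr A\in\mathcal L(K_2\ominus K_1,H)$ with $\|\mathscr A\|\|\mathscr A^{-1}\|\le\|A\|\|B\|$ and $$T(g)=\mathscr A\,P_{K_2\ominus K_1}S(g)|_{K_2\ominus K_1}\,\mathscr A^{-1},\qquad g\in G.$$ Thus $\mathcal T$ is similar to the compression of $\mathcal S$ to $K_2\ominus K_1$.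
   Context: A representation of a unital semigroup $G$ on a Hilbert space $H$ is a map $g\mapsto T(g)\in\mathcal L(H)$ with $T(gh)=T(g)T(h)$ and $T(e)=I$. $K_2\ominus K_1$ denotes the orthogonal complement of $K_1$ in $K_2$, $P_{K_2\ominus K_1}\in\mathcal L(K)$ the orthogonal projection of $K$ onto $K_2\ominus K_1$, and $S(g)|_{K_2\ominus K_1}$ the restriction of $S(g)$ to $K_2\ominus K_1$. *)

(* Defs.v *)
From HB Require Import structures.
From mathcomp Require Import all_boot all_order all_algebra.
From mathcomp Require Import classical_sets reals.
From mathcomp.real_closed Require Import complex.

Set Implicit Arguments.
Unset Strict Implicit.
Unset Printing Implicit Defensive.
Import Order.TTheory GRing.Theory Num.Theory.
Local Open Scope ring_scope.

Definition is_inner_product (R : realType) (V : lmodType R[i])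
    (ip : V -> V -> R[i]) : Prop :=
  [/\ forall (a : R[i]) (x y z : V), ip (a *: x + y) z = a * ip x z + ip y z,
      forall x y : V, ip y x = conjc (ip x y),
      forall x : V, 0 <= ip x x
    & forall x : V, ip x x = 0 -> x = 0].

Definition hnorm (R : realType) (V : lmodType R[i]) (ip : V -> V -> R[i])
    (x : V) : R := Num.sqrt (complex.Re (ip x x)).

Definition hcauchy (R : realType) (V : lmodType R[i]) (ip : V -> V -> R[i])
    (u : nat -> V) : Prop :=
  forall eps : R, 0 < eps -> exists N : nat, forall m n : nat,
    (N <= m)%N -> (N <= n)%N -> hnorm ip (u m - u n) < eps.

Definition hcvg_to (R : realType) (V : lmodType R[i]) (ip : V -> V -> R[i])
    (u : nat -> V) (l : V) : Prop :=
  forall eps : R, 0 < eps -> exists N : nat, forall n : nat,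
    (N <= n)%N -> hnorm ip (u n - l) < eps.

Definition is_hilbert (R : realType) (V : lmodType R[i])
    (ip : V -> V -> R[i]) : Prop :=
  is_inner_product ip /\
  forall u : nat -> V, hcauchy ip u -> exists l : V, hcvg_to ip u l.

Definition bounded_on (R : realType) (V W : lmodType R[i])
    (ipV : V -> V -> R[i]) (ipW : W -> W -> R[i]) (M : V -> Prop)
    (f : V -> W) : Prop :=
  exists c : R, forall x : V, M x -> hnorm ipW (f x) <= c * hnorm ipV x.

Definition bounded (R : realType) (V W : lmodType R[i])
    (ipV : V -> V -> R[i]) (ipW : W -> W -> R[i]) (f : V -> W) : Prop :=
  bounded_on ipV ipW (fun _ => True) f.

Definition opnorm_on (R : realType) (V W : lmodType R[i])
    (ipV : V -> V -> R[i]) (ipW : W -> W -> R[i]) (M : V -> Prop)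
    (f : V -> W) : R :=
  inf (fun c : R => 0 <= c /\
         forall x : V, M x -> hnorm ipW (f x) <= c * hnorm ipV x).

Definition opnorm (R : realType) (V W : lmodType R[i])
    (ipV : V -> V -> R[i]) (ipW : W -> W -> R[i]) (f : V -> W) : R :=
  opnorm_on ipV ipW (fun _ => True) f.

Definition is_representation (R : realType) (V : lmodType R[i])
    (ip : V -> V -> R[i]) (G : Type) (op : G -> G -> G) (e : G)
    (T : G -> {linear V -> V}) : Prop :=
  [/\ forall g : G, bounded ip ip (T g),
      forall (g h : G) (x : V), T (op g h) x = T g (T h x)
    & forall x : V, T e x = x].

Definition is_subspace (R : realType) (V : lmodType R[i]) (M : V -> Prop)
  : Prop :=
  [/\ M 0, forall x y : V, M x -> M y -> M (x + y)
    & forall (a : R[i]) (x : V), M x -> M (a *: x)].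

Definition is_closed_subspace (R : realType) (V : lmodType R[i])
    (ip : V -> V -> R[i]) (M : V -> Prop) : Prop :=
  is_subspace M /\
  forall (u : nat -> V) (l : V), (forall n, M (u n)) -> hcvg_to ip u l -> M l.

Definition is_invariant (R : realType) (V : lmodType R[i]) (G : Type)
    (T : G -> {linear V -> V}) (M : V -> Prop) : Prop :=
  forall (g : G) (x : V), M x -> M (T g x).

Definition ominus (R : realType) (V : lmodType R[i]) (ip : V -> V -> R[i])
    (K2 K1 : V -> Prop) : V -> Prop :=
  fun x => K2 x /\ forall y : V, K1 y -> ip x y = 0.

Definition is_orth_proj (R : realType) (V : lmodType R[i])
    (ip : V -> V -> R[i]) (M : V -> Prop) (P : V -> V) : Prop :=
  (forall x : V, M (P x)) /\
  (forall x y : V, M y -> ip (x - P x) y = 0).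

(* Main.v *)
Require Import Defs.
From HB Require Import structures.
From mathcomp Require Import all_boot all_order all_algebra.
From mathcomp Require Import boolp classical_sets reals.
From mathcomp.real_closed Require Import complex.
From mathcomp Require Import ring lra zify.
Set Implicit Arguments. Unset Strict Implicit. Unset Printing Implicit Defensive.
Import Order.TTheory GRing.Theory Num.Theory.
Local Open Scope ring_scope.

Definition mk_lin (R : realType) (U V : lmodType R[i]) (f : U -> V)
  (hf : linear f) : {linear U -> V} :=
  HB.pack f (GRing.isLinear.Build R[i] U V *:%R f hf).

Lemma mk_linE (R : realType) (U V : lmodType R[i]) (f : U -> V)
  (hf : linear f) x : mk_lin hf x = f x.
Proof. by []. Qed.


Definition nqf (R : realType) (V : lmodType R[i]) (ip : V -> V -> R[i]) (x : V) : R :=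
  complex.Re (ip x x).

Lemma ReD (R : realType) (u v : R[i]) : complex.Re (u + v) = complex.Re u + complex.Re v.
Proof. by case: u; case: v. Qed.
Lemma ReN (R : realType) (u : R[i]) : complex.Re (- u) = - complex.Re u.
Proof. by case: u. Qed.
Lemma ReJ (R : realType) (u : R[i]) : complex.Re (conjc u) = complex.Re u.
Proof. by case: u. Qed.
Lemma ReM_real (R : realType) (r : R) (u : R[i]) : complex.Re ((r%:C)%C * u) = r * complex.Re u.
Proof. by case: u => a b /=; rewrite mul0r subr0. Qed.

Lemma small_inv (R : realType) (eps : R) : 0 < eps ->
  exists N : nat, forall n : nat, (N <= n)%N -> (n.+1%:R : R)^-1 < eps.
Proof.
move=> e0; exists (Num.Def.archi_bound (eps^-1)) => n hn.
have e1 : 0 <= eps^-1 by rewrite invr_ge0 ltW.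
have h1 := archi_boundP e1.
have h2 : (Num.Def.archi_bound eps^-1)%:R <= (n.+1%:R : R) by rewrite ler_nat; lia.
have h3 : eps * eps^-1 = 1 by rewrite mulfV // gt_eqF.
rewrite -div1r ltr_pdivrMr ?ltr0Sn //.
set a := _%:R in h1 h2; set b := _%:R in h2 *; set c := eps^-1 in h1 h3 *.
nra.
Qed.

Section IP.
Variables (R : realType) (V : lmodType R[i]) (ip : V -> V -> R[i]).
Hypothesis hip : is_inner_product ip.
Local Notation nq := (nqf ip).

Lemma ipDl x y z : ip (x + y) z = ip x z + ip y z.
Proof. case: hip => h1 _ _ _. by have := h1 1 x y z; rewrite scale1r mul1r. Qed.
Lemma ip0l z : ip 0 z = 0.
Proof. have := ipDl 0 0 z; rewrite addr0 => /(congr1 (fun t => t - ip 0 z)).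
by rewrite subrr addrK. Qed.
Lemma ipZl a x z : ip (a *: x) z = a * ip x z.
Proof. case: hip => h1 _ _ _. by have := h1 a x 0 z; rewrite addr0 ip0l addr0. Qed.
Lemma ipNl x z : ip (- x) z = - ip x z.
Proof. by rewrite -scaleN1r ipZl mulN1r. Qed.
Lemma ipBl x y z : ip (x - y) z = ip x z - ip y z.
Proof. by rewrite ipDl ipNl. Qed.
Lemma ipC x y : ip y x = conjc (ip x y).
Proof. by case: hip. Qed.
Lemma ipDr x y z : ip x (y + z) = ip x y + ip x z.
Proof. by rewrite ipC ipDl rmorphD /= -!ipC. Qed.
Lemma ipZr a x z : ip x (a *: z) = conjc a * ip x z.
Proof. by rewrite ipC ipZl rmorphM /= -ipC. Qed.
Lemma ip0r z : ip z 0 = 0.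
Proof. by rewrite ipC ip0l conjc0. Qed.
Lemma ipNr x z : ip x (- z) = - ip x z.
Proof. by rewrite ipC ipNl rmorphN /= -ipC. Qed.
Lemma ipBr x y z : ip x (y - z) = ip x y - ip x z.
Proof. by rewrite ipDr ipNr. Qed.

Lemma ipxx x : ip x x = ((nq x)%:C)%C.
Proof. case: hip => _ _ h3 _; have := h3 x; rewrite /nqf.
by case: (ip x x) => a b; rewrite lecE /= => /andP[/eqP -> _]. Qed.
Lemma nq_ge0 x : 0 <= nq x.
Proof. case: hip => _ _ h3 _; have := h3 x; rewrite /nqf.
by case: (ip x x) => a b; rewrite lecE /= => /andP[_]. Qed.
Lemma nq_eq0 x : nq x = 0 -> x = 0.
Proof. move=> h; case: hip => _ _ _ h4; apply: h4; by rewrite ipxx h. Qed.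
Lemma ip_eq0 x : ip x x = 0 -> x = 0.
Proof. by move=> h; case: hip => _ _ _ h4; apply: h4. Qed.

Lemma nqD x y : nq (x + y) = nq x + nq y + 2 * complex.Re (ip x y).
Proof. rewrite /nqf ipDl !ipDr !ReD [ip y x]ipC ReJ; ring. Qed.
Lemma nqN x : nq (- x) = nq x.
Proof. by rewrite /nqf ipNl ipNr opprK. Qed.
Lemma nqB x y : nq (x - y) = nq x + nq y - 2 * complex.Re (ip x y).
Proof. by rewrite nqD nqN ipNr ReN; ring. Qed.
Lemma nq_par x y : nq (x + y) + nq (x - y) = 2 * nq x + 2 * nq y.
Proof. rewrite nqD nqB; ring. Qed.
Lemma nq0 : nq 0 = 0.
Proof. by rewrite /nqf ip0l. Qed.

Lemma hnorm_lt x e : 0 < e -> (hnorm ip x < e) = (nq x < e ^+ 2).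
Proof. move=> e0; rewrite /hnorm -{1}(ger0_norm (ltW e0)) -sqrtr_sqr ltr_sqrt //.
exact: exprn_gt0. Qed.
Lemma hnorm_sqr x : hnorm ip x ^+ 2 = nq x.
Proof. by rewrite /hnorm sqr_sqrtr // nq_ge0. Qed.
Lemma hnorm_ge0 x : 0 <= hnorm ip x.
Proof. exact: sqrtr_ge0. Qed.
Lemma hnorm_le x y : nq x <= nq y -> hnorm ip x <= hnorm ip y.
Proof. by move=> h; rewrite /hnorm ler_sqrt // nq_ge0. Qed.

Lemma hcvgP u l : hcvg_to ip u l <->
  (forall eps, 0 < eps -> exists N, forall n, (N <= n)%N -> nq (u n - l) < eps).
Proof.
split=> h eps e0.
  have [N hN] := h (Num.sqrt eps) (etrans (sqrtr_gt0 _) e0).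
  exists N => n /hN; rewrite hnorm_lt ?sqrtr_gt0 // sqr_sqrtr //; exact: ltW.
have [N hN] := h (eps ^+ 2) (exprn_gt0 _ e0); exists N => n /hN.
by rewrite hnorm_lt.
Qed.
Lemma hcauchyP u : hcauchy ip u <->
  (forall eps, 0 < eps -> exists N, forall m n, (N <= m)%N -> (N <= n)%N -> nq (u m - u n) < eps).
Proof.
split=> h eps e0.
  have [N hN] := h (Num.sqrt eps) (etrans (sqrtr_gt0 _) e0).
  exists N => m n hm /(hN _ _ hm); rewrite hnorm_lt ?sqrtr_gt0 // sqr_sqrtr //; exact: ltW.
have [N hN] := h (eps ^+ 2) (exprn_gt0 _ e0); exists N => m n hm /(hN _ _ hm).
by rewrite hnorm_lt.
Qed.

Lemma nq_tri x y : nq (x + y) <= 2 * nq x + 2 * nq y.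
Proof. rewrite -nq_par; have := nq_ge0 (x - y); lra. Qed.

Lemma hcvg_uniq u l l' : hcvg_to ip u l -> hcvg_to ip u l' -> l = l'.
Proof.
move=> /hcvgP h1 /hcvgP h2; apply/eqP; rewrite -subr_eq0; apply/eqP/nq_eq0.
apply/le_anti; rewrite nq_ge0 andbT; apply/ler_addgt0Pr => eps e0.
have e4 : 0 < eps / 4 by rewrite divr_gt0.
have [N1 hN1] := h1 _ e4; have [N2 hN2] := h2 _ e4.
have := hN1 (maxn N1 N2) (leq_maxl _ _); have := hN2 (maxn N1 N2) (leq_maxr _ _).
set v := u _ => a b.
have -> : l - l' = (v - l') + (- (v - l)) by rewrite opprB [RHS]addrC addrA subrK.
have := nq_tri (v - l') (- (v - l)); rewrite nqN; lra.
Qed.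

Lemma orth_of_min (M : V -> Prop) z : is_subspace M ->
  (forall w, M w -> nq z <= nq (z - w)) -> forall m, M m -> ip z m = 0.
Proof.
case=> M0 MD MZ hmin m Mm.
set c := ip z m.
pose r := (nq m + 1)^-1.
have r0 : 0 < r by rewrite invr_gt0; have := nq_ge0 m; lra.
have rm : r * nq m < 1.
  by rewrite mulrC ltr_pdivrMr ?mul1r; have := nq_ge0 m; lra.
pose t := ((r%:C)%C * c).
have := hmin (t *: m) (MZ _ _ Mm).
have E : ((nq (z - t *: m))%:C)%C = ((nq z)%:C)%C - ((r * (2 - r * nq m))%:C)%C * (c * conjc c).
  have cM : forall a b : R[i], conjc (a * b) = conjc a * conjc b.
    by move=> a b; exact: rmorphM.
  have rC : forall a b : R, ((a * b)%:C)%C = (a%:C)%C * (b%:C)%C.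
    by move=> a b; exact: rmorphM.
  have rB : forall a b : R, ((a - b)%:C)%C = (a%:C)%C - (b%:C)%C.
    by move=> a b; exact: rmorphB.
  have r2 : ((2 : R)%:C)%C = 2 by rewrite -[2]/(2%:R) rmorph_nat.
  rewrite -!ipxx ipBl !ipBr ipZl !ipZr ipZl [ip m z]ipC -/c /t cM conjc_real.
  rewrite !ipxx !rC rB r2 !rC.
  move: (r%:C)%C (c) (conjc c) ((nq z)%:C)%C ((nq m)%:C)%C => a b b2 d e. ring.
rewrite -lecR E -subr_ge0 addrAC subrr add0r oppr_ge0 pmulr_rle0; last first.
  by rewrite ltcR; apply: mulr_gt0 => //; lra.
move=> hq; have /eqP : c * conjc c = 0 by apply/le_anti; rewrite hq mulcJ_ge0.
by rewrite mulf_eq0 conjc_eq0 orbb => /eqP.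
Qed.

Lemma proj_exists (hc : forall u, hcauchy ip u -> exists l, hcvg_to ip u l)
  (M : V -> Prop) (hM : is_closed_subspace ip M) x :
  exists y, M y /\ (forall m, M m -> ip (x - y) m = 0).
Proof.
case: hM => hsub Mcl; case: (hsub) => M0 MD MZ.
have MN : forall a, M a -> M (- a) by move=> a Ma; rewrite -scaleN1r; exact: MZ.
pose D := (fun r : R => exists m, M m /\ r = nq (x - m)).
have D0 : D (nq (x - 0)) by exists 0.
have hD : has_inf D.
  split; first by exists (nq (x - 0)).
  by exists 0 => r [m [_ ->]]; exact: nq_ge0.
pose d := inf D.
have dle : forall m, M m -> d <= nq (x - m).
  by move=> m Mm; apply: (ge_inf (proj2 hD)); exists m.
have hseq : forall n : nat, exists m, M m /\ nq (x - m) < d + (n.+1%:R)^-1.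
  move=> n; have e0 : 0 < (n.+1%:R : R)^-1 by rewrite invr_gt0 ltr0Sn.
  by have [r [m [Mm ->]] hr] := inf_adherent e0 hD; exists m.

have [f hf] := choice hseq.
have Mf : forall n, M (f n) by move=> n; case: (hf n).
have hfd : forall n, nq (x - f n) < d + (n.+1%:R)^-1 by move=> n; case: (hf n).
have half : (2^-1 + 2^-1 : R[i]) = 1.
  have h2 : (2 : R[i]) != 0 by rewrite pnatr_eq0.
  by field.
have bnd : forall n k, nq (f k - f n) < 2 * (n.+1%:R)^-1 + 2 * (k.+1%:R)^-1.
  move=> n k.
  pose mid := 2^-1 *: (f n + f k).
  have Mmid : M mid by apply: MZ; apply: MD.
  have hw := dle _ Mmid.
  have e1 : (x - f n) + (x - f k) = (x - mid) + (x - mid).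
    have -> : (x - mid) + (x - mid) = (x + x) - (mid + mid).
      by rewrite opprD !addrA [x - mid + x]addrAC.
    rewrite /mid -scalerDl half scale1r opprD !addrA.
    by rewrite [x - f n + x]addrAC.
  have e2 : (x - f n) - (x - f k) = f k - f n.
    by rewrite opprB addrC addrA subrK.
  have := nq_par (x - f n) (x - f k); rewrite e1 e2 (nqD (x - mid) (x - mid)).
  rewrite -/(nqf ip (x - mid)).
  have := hfd n; have := hfd k; move: (n.+1%:R^-1 : R) (k.+1%:R^-1 : R) => a b; lra.
have cauchy : hcauchy ip f.
  apply/hcauchyP => eps e0.
  have [N hN] := small_inv (divr_gt0 e0 (ltr0Sn _ 3)).
  exists N => m n hm hn; have := bnd n m; have := hN _ hm; have := hN _ hn; move: (n.+1%:R^-1 : R) (m.+1%:R^-1 : R) => a b; lra.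
have [y hy] := hc f cauchy.
have My : M y by exact: Mcl f y Mf hy.
have hyd : nq (x - y) <= d.
  apply/ler_addgt0Pr => eta eta0.
  have e4 : 0 < eta / 4 by rewrite divr_gt0.
  have [N1 hN1] := small_inv e4.
  have [N2 hN2] := (hcvgP _ _).1 hy _ e4.
  pose n := maxn N1 N2.
  have h1 := hN1 n (leq_maxl _ _); have h2 := hN2 n (leq_maxr _ _).
  have Mz : M (f n + f n - y) := MD _ _ (MD _ _ (Mf n) (Mf n)) (MN _ My).
  have hz := dle _ Mz.
  have e1 : (x - f n) + (f n - y) = x - y by rewrite addrA subrK.
  have e2 : (x - f n) - (f n - y) = x - (f n + f n - y).
    by rewrite opprB [in RHS]opprB opprD !addrA [x - f n + y]addrAC.
  have := nq_par (x - f n) (f n - y); rewrite e1 e2.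
  have := hfd n; move: (n.+1%:R^-1 : R) h1 => a h1; lra.
exists y; split => //.
apply: (orth_of_min hsub) => w Mw.
have -> : x - y - w = x - (y + w) by rewrite opprD addrA.
apply: (le_trans hyd); apply: dle; exact: MD.
Qed.

Lemma proj_uniq (M : V -> Prop) x a b : is_subspace M -> M a -> M b ->
  (forall m, M m -> ip (x - a) m = 0) -> (forall m, M m -> ip (x - b) m = 0) ->
  a = b.
Proof.
case=> M0 MD MZ Ma Mb ha hb.
have MN : forall a, M a -> M (- a) by move=> c Mc; rewrite -scaleN1r; exact: MZ.
have Mab : M (a - b) by apply: MD => //; exact: MN.
apply/eqP; rewrite -subr_eq0; apply/eqP/ip_eq0.
have E : a - b = (x - b) - (x - a).
  by apply/esym; rewrite opprB addrC addrA subrK.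
by rewrite {1}E ipBl hb // ha // subrr.
Qed.

Lemma subspaceB (M : V -> Prop) a b : is_subspace M -> M a -> M b -> M (a - b).
Proof. case=> M0 MD MZ Ma Mb; apply: MD => //; rewrite -scaleN1r; exact: MZ. Qed.

Lemma cvg_const (l : V) : hcvg_to ip (fun _ => l) l.
Proof. by apply/hcvgP => eps e0; exists 0%N => n _; rewrite subrr nq0. Qed.

End IP.

Lemma bounded_nq (R : realType) (V W : lmodType R[i]) (ipV : V -> V -> R[i])
  (ipW : W -> W -> R[i]) (hV : is_inner_product ipV) (hW : is_inner_product ipW)
  (f : V -> W) : bounded ipV ipW f ->
  exists C, 0 <= C /\ forall x, nqf ipW (f x) <= C * nqf ipV x.
Proof.
move=> [c hc]; exists (c ^+ 2); split; first exact: sqr_ge0.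
move=> x; have h := hc x I.
have := ler_pM (hnorm_ge0 ipW (f x)) (hnorm_ge0 ipW (f x)) h h.
move=> hh; rewrite -(hnorm_sqr hW) -(hnorm_sqr hV) !expr2; nra.
Qed.

Lemma cont_lin (R : realType) (V W : lmodType R[i]) (ipV : V -> V -> R[i])
  (ipW : W -> W -> R[i]) (hV : is_inner_product ipV) (hW : is_inner_product ipW)
  (f : V -> W) (fB : forall a b, f (a - b) = f a - f b) u l :
  bounded ipV ipW f -> hcvg_to ipV u l ->
  hcvg_to ipW (fun n => f (u n)) (f l).
Proof.
move=> /(bounded_nq hV hW) [C [C0 hC]] /(hcvgP ipV) hu; apply/(hcvgP ipW) => eps e0.
have e1 : 0 < eps / (C + 1) by rewrite divr_gt0 //; lra.
have [N hN] := hu _ e1; exists N => n /hN hn.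
rewrite -fB; apply: (le_lt_trans (hC _)).
have e2 : eps / (C + 1) * (C + 1) = eps by rewrite mulfVK // gt_eqF //; lra.
move: (eps / (C + 1)) e1 hn e2 => a a0 hn e2.
have := nq_ge0 hV (u n - l); nra.
Qed.

Lemma inf_sub (R : realType) (E F : set R) : (exists c, E c) ->
  (forall c, F c -> 0 <= c) -> (forall c, E c -> F c) -> inf F <= inf E.
Proof.
move=> [c Ec] F0 EF; apply: lb_le_inf; first by exists c.
move=> y Ey; apply: (ge_inf _ (EF _ Ey)); by exists 0.
Qed.

Lemma inf_ge0 (R : realType) (F : set R) : (exists c, F c) ->
  (forall c, F c -> 0 <= c) -> 0 <= inf F.
Proof. by move=> [c Fc] F0; apply: lb_le_inf; first by exists c. Qed.

Theorem proposition4p1 (R : realType)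
  (G : Type) (op : G -> G -> G) (e : G)
  (op_assoc : forall a b c : G, op a (op b c) = op (op a b) c)
  (op_e_l : forall a : G, op e a = a) (op_e_r : forall a : G, op a e = a)
  (H K : lmodType R[i]) (ipH : H -> H -> R[i]) (ipK : K -> K -> R[i])
  (hH : is_hilbert ipH) (hK : is_hilbert ipK)
  (T : G -> {linear H -> H}) (S : G -> {linear K -> K})
  (hT : is_representation ipH op e T) (hS : is_representation ipK op e S)
  (A : {linear K -> H}) (B : {linear H -> K})
  (hA : bounded ipK ipH A) (hB : bounded ipH ipK B)
  (hTS : forall (g : G) (x : H), T g x = A (S g (B x))) :
  exists (K1 K2 : K -> Prop) (P : K -> K)
         (sA : {linear K -> H}) (sAinv : {linear H -> K}),
    [/\ [/\ is_closed_subspace ipK K1, is_closed_subspace ipK K2,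
           (forall x : K, K1 x -> K2 x),
           is_invariant S K1 & is_invariant S K2],
        is_orth_proj ipK (ominus ipK K2 K1) P,
        (* sA restricted to K2 ⊖ K1 is a bounded isomorphism onto H
           with bounded inverse sAinv *)
        [/\ bounded_on ipK ipH (ominus ipK K2 K1) sA,
            bounded ipH ipK sAinv,
            forall h : H, ominus ipK K2 K1 (sAinv h),
            forall h : H, sA (sAinv h) = h
          & forall x : K, ominus ipK K2 K1 x -> sAinv (sA x) = x],
        opnorm_on ipK ipH (ominus ipK K2 K1) sA * opnorm ipH ipK sAinv
          <= opnorm ipK ipH A * opnorm ipH ipK B
      & forall (g : G) (h : H), T g h = sA (P (S g (sAinv h)))].
Proof.
case: hH => hipH hcH; case: hK => hipK hcK.
case: hT => Tb Tmul Te; case: hS => Sb Smul Se.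
have ABid : forall h, A (B h) = h by move=> h; rewrite -{2}(Te h) hTS Se.
pose N := fun x => forall g, A (S g x) = 0.
pose K2 := fun x => forall g, A (S g x) = T g (A x).
have AN0 : forall x, N x -> A x = 0 by move=> x hx; rewrite -(Se x) hx.
have NK2 : forall x, N x -> K2 x by move=> x hx g; rewrite hx AN0 // linear0.
have BK2 : forall h, K2 (B h) by move=> h g; rewrite -hTS ABid.
have subN : is_subspace N.
  split; first by move=> g; rewrite !linear0.
    by move=> x y hx hy g; rewrite !linearD /= hx hy addr0.
  by move=> a x hx g; rewrite !linearZ /= hx scaler0.
have subK2 : is_subspace K2.
  split; first by move=> g; rewrite !linear0.
    by move=> x y hx hy g; rewrite !linearD /= hx hy ?linearD.
  by move=> a x hx g; rewrite !linearZ /= hx ?linearZ.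
have bAS : forall g, bounded ipK ipH (fun x => A (S g x)).
  move=> g; have [c1 h1] := hA; have [c2 h2] := Sb g.
  exists (`|c1| * `|c2|) => x _.
  apply: (le_trans (h1 _ I)); rewrite -mulrA.
  have := h2 x I; have := hnorm_ge0 ipK (S g x); have := hnorm_ge0 ipK x.
  have := ler_norm c1; have := ler_norm c2; have := normr_ge0 c1; have := normr_ge0 c2.
  move: (hnorm ipK x) (hnorm ipK (S g x)) `|c1| `|c2| => a b u v *.
  have h3 : c2 * a <= v * a by nra.
  nra.
have bTA : forall g, bounded ipK ipH (fun x => T g (A x)).
  move=> g; have [c1 h1] := hA; have [c2 h2] := Tb g.
  exists (`|c2| * `|c1|) => x _.
  apply: (le_trans (h2 _ I)); rewrite -mulrA.
  have := h1 x I; have := hnorm_ge0 ipH (A x); have := hnorm_ge0 ipK x.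
  have := ler_norm c1; have := ler_norm c2; have := normr_ge0 c1; have := normr_ge0 c2.
  move: (hnorm ipK x) (hnorm ipH (A x)) `|c1| `|c2| => a b u v *.
  have h3 : c1 * a <= u * a by nra.
  nra.
have clN : is_closed_subspace ipK N.
  split=> // u l hu hl g.
  have c1 := @cont_lin _ _ _ _ _ hipK hipH (fun x => A (S g x))
    (fun a b => ltac:(by rewrite /= !linearB)) _ _ (bAS g) hl.
  have E : (fun n => A (S g (u n))) = (fun _ => 0).
    by apply: funext => n; rewrite hu.
  rewrite E in c1.
  by apply: (hcvg_uniq hipH c1); exact: cvg_const.
have clK2 : is_closed_subspace ipK K2.
  split=> // u l hu hl g.
  have c1 := @cont_lin _ _ _ _ _ hipK hipH (fun x => A (S g x))
    (fun a b => ltac:(by rewrite /= !linearB)) _ _ (bAS g) hl.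
  have c2 := @cont_lin _ _ _ _ _ hipK hipH (fun x => T g (A x))
    (fun a b => ltac:(by rewrite /= !linearB)) _ _ (bTA g) hl.
  have E : (fun n => A (S g (u n))) = (fun n => T g (A (u n))).
    by apply: funext => n; rewrite hu.
  rewrite E in c1.
  exact: (hcvg_uniq hipH c1 c2).
have invN : is_invariant S N.
  by move=> g x hx h; rewrite -Smul hx.
have invK2 : is_invariant S K2.
  by move=> g x hx h; rewrite -Smul hx Tmul hx.
have [P1 hP1] := choice (proj_exists hipK hcK clN).
have [P2 hP2] := choice (proj_exists hipK hcK clK2).
pose M := ominus ipK K2 N.
pose P := fun x => P2 x - P1 x.
have PM : forall x, M (P x).
  move=> x; split.
    apply: (subspaceB subK2); first by case: (hP2 x).
    by apply: NK2; case: (hP1 x).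
  move=> y Ny; rewrite (ipBl hipK).
  have h2 := (hP2 x).2 y (NK2 _ Ny); have h1 := (hP1 x).2 y Ny.
  rewrite (ipBl hipK) in h2; rewrite (ipBl hipK) in h1.
  by move/eqP: h2; rewrite subr_eq0 => /eqP <-; move/eqP: h1; rewrite subr_eq0 => /eqP <-; rewrite subrr.
have Porth : forall x y, M y -> ipK (x - P x) y = 0.
  move=> x y [K2y oy].
  have -> : x - P x = (x - P2 x) + P1 x by rewrite /P opprB addrA addrAC.
  rewrite (ipDl hipK) (hP2 x).2 // add0r (ipC hipK) oy ?conjc0 //; by case: (hP1 x).
clearbody P.
have subM : is_subspace M.
  split.
  - split; first by case: subK2.
    by move=> y _; rewrite (ip0l hipK).
  - move=> x y [hx ox] [hy oy]; split; first by case: subK2 => _ + _; apply.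
    by move=> z hz; rewrite (ipDl hipK) ox // oy // addr0.
  - move=> a x [hx ox]; split; first by case: subK2 => _ _; apply.
    by move=> z hz; rewrite (ipZl hipK) ox // mulr0.
have Puniq : forall x a, M a -> (forall m, M m -> ipK (x - a) m = 0) -> P x = a.
  by move=> x a Ma ha; apply: (proj_uniq hipK (x := x) subM (PM x) Ma (Porth x) ha).
have Plin : linear P.
  move=> a x y; apply: Puniq.
    by case: subM => _ MD MZ; apply: MD; [apply: MZ; apply: PM | apply: PM].
  move=> m Mm.
  have -> : a *: x + y - (a *: P x + P y) = a *: (x - P x) + (y - P y).
    by rewrite scalerBr opprD addrACA.
  by rewrite (ipDl hipK) (ipZl hipK) !Porth // mulr0 addr0.
have PfixM : forall x, M x -> P x = x.
  by move=> x Mx; apply: Puniq => // m Mm; rewrite subrr (ip0l hipK).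
have PkillN : forall n, N n -> P n = 0.
  move=> n Nn; apply: Puniq; first by case: subM.
  by move=> m [_ om]; rewrite subr0 (ipC hipK) om // conjc0.
have zN : forall z, K2 z -> (forall m, M m -> ipK z m = 0) -> N z.
  move=> z K2z oz.
  have [Nn on] := hP1 z.
  have Mw : M (z - P1 z).
    split; first by apply: (subspaceB subK2) => //; exact: NK2.
    exact: on.
  have w0 : z - P1 z = 0.
    apply: (ip_eq0 hipK); rewrite {1}(ipBl hipK) oz // (ipC hipK) on // conjc0.
    by rewrite subrr.
  by move/eqP: w0; rewrite subr_eq0 => /eqP ->.
have AP : forall x, K2 x -> A (P x) = A x.
  move=> x K2x.
  have K2Px : K2 (P x) by case: (PM x).
  have := AN0 _ (zN _ (subspaceB subK2 K2x K2Px) (Porth x)).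
  by rewrite linearB => /eqP; rewrite subr_eq0 => /eqP.
pose PL : {linear K -> K} := mk_lin Plin.
have sAlin : linear (fun h => PL (B h)).
  by move=> a x y /=; rewrite linearP Plin.
pose sAinv : {linear H -> K} := mk_lin sAlin.
have contr : forall x, nqf ipK (P x) <= nqf ipK x.
  move=> x; have E : x = P x + (x - P x) by rewrite addrC subrK.
  rewrite {2}E (nqD hipK) (ipC hipK) Porth // conjc0 /=.
  have := nq_ge0 hipK (x - P x); lra.
have sAinvE : forall h, sAinv h = P (B h) by [].
have BAx : forall x, M x -> P (B (A x)) = x.
  move=> x [K2x ox].
  have Nd : N (B (A x) - x).
    by move=> g; rewrite !linearB /= (BK2 (A x) g) K2x ABid subrr.
  have -> : B (A x) = x + (B (A x) - x) by rewrite addrC subrK.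
  have := Plin 1 x (B (A x) - x); rewrite !scale1r => ->.
  by rewrite PfixM // PkillN // addr0.
have ASinv : forall h, A (P (B h)) = h by move=> h; rewrite AP // ABid.
exists N, K2, P, A, sAinv; split.
- by split.
- by split; [exact: PM | exact: Porth].
- split.
  + by case: hA => c hc; exists c => x _; exact: hc.
  + case: hB => c hc; exists `|c| => h _; rewrite sAinvE.
    apply: (le_trans (hnorm_le hipK (contr _))); apply: (le_trans (hc h I)).
    by apply: ler_wpM2r; [exact: hnorm_ge0 | exact: ler_norm].
  + by move=> h; rewrite sAinvE; exact: PM.
  + by move=> h; rewrite sAinvE.
  + by move=> x Mx; rewrite sAinvE BAx.
- have nA : exists c, 0 <= c /\ forall x : K, True -> hnorm ipH (A x) <= c * hnorm ipK x.
    case: hA => c hc; exists `|c|; split => // x _; apply: (le_trans (hc x I)).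
    by apply: ler_wpM2r; [exact: hnorm_ge0 | exact: ler_norm].
  have nB : exists c, 0 <= c /\ forall x : H, True -> hnorm ipK (B x) <= c * hnorm ipH x.
    case: hB => c hc; exists `|c|; split => // x _; apply: (le_trans (hc x I)).
    by apply: ler_wpM2r; [exact: hnorm_ge0 | exact: ler_norm].
  have subA : forall c, (0 <= c /\ forall x : K, True -> hnorm ipH (A x) <= c * hnorm ipK x) ->
      (0 <= c /\ forall x : K, M x -> hnorm ipH (A x) <= c * hnorm ipK x).
    by move=> c [c0 hc]; split => // x _; exact: hc.
  have subB : forall c, (0 <= c /\ forall x : H, True -> hnorm ipK (B x) <= c * hnorm ipH x) ->
      (0 <= c /\ forall x : H, True -> hnorm ipK (sAinv x) <= c * hnorm ipH x).
    move=> c [c0 hc]; split => // x _; rewrite sAinvE.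
    exact: (le_trans (hnorm_le hipK (contr _)) (hc x I)).
  have h1 : opnorm_on ipK ipH M A <= opnorm ipK ipH A.
    by apply: inf_sub => //; move=> c [].
  have h2 : opnorm ipH ipK sAinv <= opnorm ipH ipK B.
    by apply: inf_sub => //; move=> c [].
  have g1 : 0 <= opnorm_on ipK ipH M A.
    apply: inf_ge0; last by move=> c [].
    by case: nA => c /subA hc; exists c.
  have g2 : 0 <= opnorm ipH ipK sAinv.
    apply: inf_ge0; last by move=> c [].
    by case: nB => c /subB hc; exists c.
  exact: ler_pM g1 g2 h1 h2.
- move=> g h; rewrite sAinvE.
  have My := PM (B h); have K2y : K2 (P (B h)) by case: My.
  by rewrite AP ?ASinv //; [rewrite (K2y g) ASinv | exact: invK2].
Qed.
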